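(* Let $w\in W_n$ have first right descent at $k\geq0$, let $\gamma$ be its A-code, $m=\ell(\mu(w))$, $\beta=\beta(w)$, and for $s\geq1$ let $\phi_s:=\#\{i\in[1,k]\mid\gamma_i\geq s\}$. (a) If $\beta_{s+1}>\beta_s+1$, then $|\beta_s|$ is a left descent of $w$. (b) If $s\leq m$, then $\phi_s=k$, while if $s>m$ and $\beta_{s+1}=\beta_s+1$, then $\phi_s=\phi_{s+1}$.
   Context: $W_n$: signed permutations $w=(w_1,\ldots,w_n)$ of $\{1,\ldots,n\}$. $w$ has a right descent at $0$ iff $w_1<0$ and at $i\geq1$ iff $w_i>w_{i+1}$; the first right descent is the smallest such index. $w$ has a left descent at $0$ iff $-1$ is an entry of $w$, and at $i\geq1$ iff $w$ has one of the forms $(\cdots i{+}1\cdots i\cdots)$, $(\cdots i\cdots\overline{i{+}1}\cdots)$, $(\cdots\overline{i{+}1}\cdots i\cdots)$, $(\cdots\bar i\cdots\overline{i{+}1}\cdots)$, where $\bar a=-a$. A-code: $\gamma_i:=\#\{j>i\mid w_j<w_i\}$. $\mu(w)$ is the strict partition of absolute values of the negative entries. Listing $w_{k+1},\ldots,w_n$ increasingly as $u_1<\cdots<u_m<0<u_{m+1}<\cdots<u_{n-k}$, $\beta(w):=(u_1+1,\ldots,u_m+1,u_{m+1},\ldots,u_{n-k})$; indices $s$ in the statement satisfy $1\leq s<n-k$ where $\beta_{s+1}$ is referenced. *)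

(* Defs.v *)
From mathcomp Require Import all_boot all_order all_algebra.
Set Implicit Arguments. Unset Strict Implicit. Unset Printing Implicit Defensive.
Import Order.TTheory GRing.Theory Num.Theory.
Local Open Scope ring_scope.

Definition signed_perm (n : nat) (w : seq int) : bool :=
  (size w == n) && perm_eq (map absz w) (iota 1 n).

Definition ent (w : seq int) (i : nat) : int := nth 0 w i.-1.

Definition rdes (w : seq int) (i : nat) : bool :=
  if i == 0%N then ent w 1 < 0
  else (i < size w)%N && (ent w i.+1 < ent w i).

Definition first_rdes (w : seq int) (k : nat) : Prop :=
  rdes w k /\ forall i, (i < k)%N -> ~~ rdes w i.

Definition ldes (w : seq int) (i : nat) : bool :=
  if i == 0%N then (-1) \in w
  else
    let a : int := i%:Z in
    [exists p : 'I_(size w), exists q : 'I_(size w),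
      (p < q)%N &&
      [|| (w`_p == a + 1) && (w`_q == a),
          (w`_p == a) && (w`_q == - (a + 1)),
          (w`_p == - (a + 1)) && (w`_q == a)
        | (w`_p == - a) && (w`_q == - (a + 1))]].

Definition gamma (w : seq int) (i : nat) : nat :=
  count (fun x => x < ent w i) (drop i w).

Definition mu (w : seq int) : seq nat :=
  sort geq (map absz (filter (fun x => x < 0) w)).

Definition beta_seq (w : seq int) (k : nat) : seq int :=
  map (fun u => if u < 0 then u + 1 else u) (sort <=%R (drop k w)).

Definition beta (w : seq int) (k s : nat) : int := nth 0 (beta_seq w k) s.-1.

Definition phi (w : seq int) (k s : nat) : nat :=
  count (fun i => (s <= gamma w i)%N) (iota 1 k).

(* Main.v *)
Require Import Defs.
From mathcomp Require Import all_boot all_order all_algebra zify.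
Import Order.TTheory GRing.Theory Num.Theory.
Local Open Scope ring_scope.

Lemma sorted_count_nth (u : seq int) (x : int) j :
  sorted <=%R u -> (j < size u)%N ->
  (u`_j < x) = (j < count (fun y => (y < x)%R) u)%N.
Proof.
move: j; elim: u => [|y u IH] j //= hp hj.
have hall := order_path_min (@le_trans _ int) hp.
have hs := path_sorted hp.
case: (boolP (y < x)) => hyx.
  case: j hj => [|j] hj //=.
  by rewrite add1n ltnS IH.
rewrite -leNgt in hyx.
have c0 : count (fun y => y < x) u = 0%N.
  apply/eqP; rewrite -leqn0 leqNgt -has_count; apply/hasPn => z hz.
  move/allP: hall => /(_ z hz) hyz; rewrite -leNgt; exact: le_trans hyz.
rewrite c0 /=; case: j hj => [|j] hj /=; first by rewrite ltNge hyx.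
apply/negbTE; rewrite -leNgt; apply: le_trans hyx _.
by move/allP: hall; apply; apply: mem_nth.
Qed.

Arguments sorted_count_nth {u} x {j}.

Lemma sorted_no_between (u : seq int) j v :
  sorted <=%R u -> (j.+1 < size u)%N -> v \in u -> u`_j < v -> v < u`_j.+1 -> False.
Proof.
move=> hs hj hv h1 h2.
have hi : (index v u < size u)%N by rewrite index_mem.
have e := nth_index 0 hv.
have hm := sorted_leq_nth (@le_trans _ int) (@lexx _ int) 0 hs.
case: (leqP (index v u) j) => hij.
  have := hm (index v u) j hi (ltnW hj) hij; rewrite e => h.
  by move: (lt_le_trans h1 h); rewrite ltxx.
have := hm j.+1 (index v u) hj hi hij; rewrite e => h.
by move: (lt_le_trans h2 h); rewrite ltxx.
Qed.

Lemma pair_pos (w : seq int) x y : x \in w -> y \in w -> x != y ->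
  exists p q : 'I_(size w), w`_p = x /\ w`_q = y /\ ((p < q)%N \/ (q < p)%N).
Proof.
move=> hx hy nxy.
exists (Ordinal (etrans (index_mem x w) hx)), (Ordinal (etrans (index_mem y w) hy)) => /=.
rewrite !nth_index //; do 2 split => //.
case: (ltngtP (index x w) (index y w)) => h; [by left|by right|].
by move: nxy; rewrite -(nth_index 0 hx) -(nth_index 0 hy) h eqxx.
Qed.

Lemma ldes_intro (w : seq int) (a : nat) (p q : 'I_(size w)) : (0 < a)%N -> (p < q)%N ->
  [\/ (w`_p = a%:Z + 1 /\ w`_q = a%:Z), (w`_p = a%:Z /\ w`_q = - (a%:Z + 1)),
       (w`_p = - (a%:Z + 1) /\ w`_q = a%:Z) | (w`_p = - a%:Z /\ w`_q = - (a%:Z + 1))] ->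
  ldes w a.
Proof.
move=> ha hpq h; rewrite /ldes; case: eqP => [e|_]; first by move: ha; rewrite e.
apply/existsP; exists p; apply/existsP; exists q; rewrite hpq /=.
by case: h => [[-> ->]|[-> ->]|[-> ->]|[-> ->]]; rewrite !eqxx /= ?orbT.
Qed.

Lemma partA (w t : seq int) (n : nat) (y z : int) :
  (forall x, x \in w -> (1 <= absz x <= n)%N) ->
  (forall a, (1 <= a <= n)%N -> exists2 x, x \in w & absz x = a) ->
  0 \notin w ->
  (forall x, x \in w -> x < 0 -> x \in t) ->
  (forall x, x \in t -> x \in w) ->
  (forall p, (p < size w)%N -> w`_p \in t -> forall q, (p < q)%N -> (q < size w)%N -> w`_q \in t) ->
  y \in t -> z \in t ->
  (forall v, v \in t -> y < v -> v < z -> False) ->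
  (if y < 0 then y + 1 else y) + 1 < (if z < 0 then z + 1 else z) ->
  ldes w `|if y < 0 then y + 1 else y|.
Proof.
move=> hmemabs hex h0 hnegt tw hqt hyt hzt nb.
have hyw := tw _ hyt; have hzw := tw _ hzt.
have hy0 : y != 0 by apply: contraNneq h0 => <-.
have hya := hmemabs _ hyw; have hza := hmemabs _ hzw.
case: (boolP (y < 0)) => hy hb.
-
  have [e1|ne1] := eqVneq y (-1).
    have -> : absz (y + 1) = 0%N by rewrite e1.
    by rewrite /ldes /= -e1.
  set a := absz (y + 1).
  have ea : a%:Z = - (y + 1) by rewrite /a; lia.
  have ha : (0 < a)%N by rewrite /a; lia.
  have hzy : y + 1 < z.
    move: hb; case: ifP => hz hb; lia.
  have [x hxw hxa] := hex a (ltac:(rewrite /a; lia)).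
  have ex : x = a%:Z.
    have [hx|hx] := ltP x 0.
      exfalso; apply: (nb x); [exact: hnegt|lia|lia].
    lia.
  have nxy : x != y.
    apply/negP => /eqP e; move: hy; rewrite -e ex; lia.
  have [p [q [hp [hq hpq]]]] := @pair_pos w x y hxw hyw nxy.
  case: hpq => hpq.
    apply: (@ldes_intro w a _ _ ha hpq); apply: Or42; split; [by rewrite hp|by rewrite hq; lia].
  apply: (@ldes_intro w a _ _ ha hpq); apply: Or43; split; [by rewrite hq; lia|by rewrite hp].
-
  rewrite -leNgt in hy.
  have hz : ~~ (z < 0) by apply/negP => hz; move: hb; rewrite hz; lia.
  rewrite (negbTE hz) in hb; rewrite -leNgt in hz.
  set a := absz y.
  have ea : a%:Z = y by rewrite /a; lia.
  have ha : (0 < a)%N by rewrite /a; lia.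
  have [x hxw hxa] := hex a.+1 (ltac:(rewrite /a; lia)).
  have [hx|hx] : x = - (a.+1)%:Z \/ x = (a.+1)%:Z by lia.
  + have nxy : y != x by apply/negP => /eqP e; move: hy; rewrite e hx; lia.
    have [p [q [hp [hq hpq]]]] := @pair_pos w y x hyw hxw nxy.
    case: hpq => hpq.
      apply: (@ldes_intro w a _ _ ha hpq); apply: Or42; split; [by rewrite hp|by rewrite hq hx; lia].
    apply: (@ldes_intro w a _ _ ha hpq); apply: Or43; split; [by rewrite hq hx; lia|by rewrite hp].
  + have nxy : x != y by apply/negP => /eqP e; move: ea; rewrite -e hx; lia.
    have [p [q [hp [hq hpq]]]] := @pair_pos w x y hxw hyw nxy.
    case: hpq => hpq.
      apply: (@ldes_intro w a _ _ ha hpq); apply: Or41; split; [by rewrite hp hx; lia|by rewrite hq].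
    exfalso; apply: (nb x).
    * rewrite -hp; apply: (hqt q) => //; by rewrite hq.
    * rewrite hx; lia.
    * rewrite hx; lia.
Qed.


Theorem lemma11 (n : nat) (w : seq int) (k : nat) :
  signed_perm n w -> first_rdes w k ->
  let m := size (mu w) in
  (forall s : nat, (1 <= s)%N -> (s < n - k)%N ->
     beta w k s.+1 > beta w k s + 1 -> ldes w `|beta w k s|%N) /\
  (forall s : nat, (1 <= s)%N -> (s <= m)%N -> phi w k s = k) /\
  (forall s : nat, (m < s)%N -> (s < n - k)%N ->
     beta w k s.+1 = beta w k s + 1 -> phi w k s = phi w k s.+1).
Proof.
move=> /andP [/eqP hsz hperm] [hrk hnot] m.
have huniq : uniq w.
  have : uniq (map absz w) by rewrite (perm_uniq hperm) iota_uniq.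
  exact: map_uniq.
have hmemabs : forall x, x \in w -> (1 <= absz x <= n)%N.
  move=> x hx; have : absz x \in iota 1 n by rewrite -(perm_mem hperm) map_f.
  by rewrite mem_iota; lia.
have hex : forall a, (1 <= a <= n)%N -> exists2 x, x \in w & absz x = a.
  move=> a ha; have : a \in map absz w by rewrite (perm_mem hperm) mem_iota; lia.
  by case/mapP=> x hx ->; exists x.
have hk : (k < n)%N.
  move: hrk; rewrite /rdes /ent; case: eqP => [->|_].
    by rewrite -hsz; case: (w) => //=.
  by rewrite hsz => /andP[].
have h0 : 0 \notin w by apply/negP => /hmemabs.
have hstep : forall j, (j.+1 < k)%N -> w`_j <= w`_j.+1.
  move=> j hj; have := hnot _ hj; rewrite /rdes /ent /= hsz.
  have -> : (j.+1 < n)%N by lia.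
  by rewrite /= -leNgt.
have hmono : forall i j, (i <= j)%N -> (j < k)%N -> w`_i <= w`_j.
  move=> i j; elim: j => [|j IH] hij hjk; first by move: hij; rewrite leqn0 => /eqP ->.
  case: (ltngtP i j.+1) => h; [|lia|by rewrite h].
  apply: le_trans (hstep _ hjk); apply: IH; lia.
have hpos : forall j, (j < k)%N -> 0 < w`_j.
  move=> j hj; have h1 : 0 <= w`_0.
    by have := hnot 0%N (leq_ltn_trans (leq0n j) hj); rewrite /rdes /ent /= -leNgt.
  have h2 : w`_0 != 0.
    apply/negP => /eqP e; move/negP: h0; apply; rewrite -e mem_nth // hsz; lia.
  apply: lt_le_trans (hmono 0%N j (leq0n j) hj); rewrite lt_def h2 h1 //.
set t := drop k w; set u := sort <=%R t.
have hsu : sorted <=%R u := sort_sorted (@le_total _ int) t.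
have hpu : perm_eq u t by rewrite perm_sort.
have hsizeu : size u = (n - k)%N by rewrite size_sort size_drop hsz.
have hmemu : forall x, (x \in u) = (x \in t) by move=> x; rewrite mem_sort.
have htake : forall x, x \in take k w -> 0 < x.
  move=> x /(nthP 0) [j]; rewrite size_take hsz hk => hj <-.
  by rewrite nth_take //; apply: hpos.
have hdisj : forall x, x \in take k w -> x \in t -> False.
  move=> x h1 h2; move: huniq; rewrite -(cat_take_drop k w) cat_uniq => /and3P [_ /hasPn hh _].
  by move: (hh x h2) => /negP; apply.
have hnegt : forall x, x \in w -> x < 0 -> x \in t.
  move=> x; rewrite -{1}(cat_take_drop k w) mem_cat => /orP [/htake h1 h2|//].
  by move: (lt_trans h1 h2); rewrite ltxx.
have hcount : count (fun y => y < 0) u = m.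
  rewrite /m /mu size_sort size_map size_filter (permP hpu) -[in RHS](cat_take_drop k w) count_cat.
  suff -> : count (fun y => y < 0) (take k w) = 0%N by [].
  apply/eqP; rewrite -leqn0 leqNgt -has_count; apply/hasPn => z /htake hz.
  by rewrite -leNgt ltW.
have hgamma : forall i, (0 < i <= k)%N -> gamma w i = count (fun y => y < w`_i.-1) u.
  move=> i hi; rewrite /gamma /ent (permP hpu).
  rewrite -(cat_take_drop (k - i) (drop i w)) drop_drop count_cat.
  have -> : (k - i + i = k)%N by lia.
  suff -> : count (fun y => y < w`_i.-1) (take (k - i) (drop i w)) = 0%N by [].
  apply/eqP; rewrite -leqn0 leqNgt -has_count; apply/hasPn => z /(nthP 0) [j].
  rewrite size_take size_drop hsz => hj <-.
  have hj' : (j < k - i)%N by move: hj; case: ifP => //; lia.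
  rewrite nth_take // nth_drop -leNgt; apply: hmono; lia.
have hbeta : forall s, (0 < s)%N -> (s <= n - k)%N ->
    beta w k s = if u`_s.-1 < 0 then u`_s.-1 + 1 else u`_s.-1.
  move=> s h1 h2; rewrite /beta /beta_seq (nth_map 0) // -/t -/u hsizeu; lia.
have hmu : (m <= size u)%N by rewrite -hcount count_size.
have hnegu : forall j, (j < size u)%N -> (u`_j < 0) = (j < m)%N.
  by move=> j hj; rewrite (sorted_count_nth 0 hsu hj) hcount.
have hxin : forall i, (0 < i <= k)%N -> w`_i.-1 \in take k w.
  move=> i hi; rewrite -(nth_take 0 (_ : i.-1 < k)%N); last lia.
  apply: mem_nth; rewrite size_take hsz hk; lia.
have huin : forall j, (j < size u)%N -> u`_j \in t.
  by move=> j hj; rewrite -hmemu mem_nth.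
split; [|split].
3: {
  move=> s hms hsn hb.
  have hs1 : (s.-1 < size u)%N by rewrite hsizeu; lia.
  have hs2 : (s < size u)%N by rewrite hsizeu; lia.
  move: hb; rewrite (hbeta s) ?(hbeta s.+1) /=; try lia.
  rewrite (hnegu _ hs1) (hnegu _ hs2).
  have -> : (s.-1 < m)%N = false by lia.
  have -> : (s < m)%N = false by lia.
  move=> hb.
  rewrite /phi; apply: eq_in_count => i; rewrite mem_iota => hi.
  rewrite hgamma; last lia.
  have A := sorted_count_nth (w`_i.-1) hsu hs1.
  have B := sorted_count_nth (w`_i.-1) hsu hs2.
  set c := count _ u in A B *.
  apply/idP/idP => h; last lia.
  have hA : u`_s.-1 < w`_i.-1 by rewrite A; lia.
  apply/negPn/negP => hn.
  have hB : ~~ (u`_s < w`_i.-1) by rewrite B; lia.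
  have e : w`_i.-1 = u`_s.
    by apply/eqP; rewrite eq_le leNgt hB /= hb lezD1.
  apply: (hdisj (w`_i.-1)); [apply: hxin; lia| rewrite e; exact: huin].
}
2: {
  move=> s hs1 hsm.
  rewrite /phi; apply/eqP; rewrite -[k in _ == k](size_iota 1 k) -all_count.
  apply/allP => i; rewrite mem_iota => hi /=.
  rewrite hgamma; last lia.
  have hs : (s.-1 < size u)%N by lia.
  have A := sorted_count_nth (w`_i.-1) hsu hs.
  have h1 : u`_s.-1 < 0 by rewrite hnegu //; lia.
  have h2 : 0 < w`_i.-1 by apply: hpos; lia.
  set c := count _ u in A *; have := lt_trans h1 h2; rewrite A; lia.
}
move=> s hs0 hsn.
have hs1 : (s.-1 < size u)%N by rewrite hsizeu; lia.
have hs2 : (s < size u)%N by rewrite hsizeu; lia.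
rewrite (hbeta s) // ?(hbeta s.+1) //=; [|lia].
have hyt := huin _ hs1; have hzt := huin _ hs2.
have nb : forall v, v \in t -> u`_s.-1 < v -> v < u`_s -> False.
  move=> v hv h1 h2; apply: (@sorted_no_between u s.-1 v hsu _ _ h1).
  - by rewrite prednK.
  - by rewrite hmemu.
  - by rewrite prednK.
have tw : forall x, x \in t -> x \in w by move=> x /mem_drop.
have hpost : forall p, (p < size w)%N -> w`_p \in t -> (k <= p)%N.
  move=> p hp ht; rewrite leqNgt; apply/negP => hpk.
  apply: (hdisj _ _ ht); rewrite -(nth_take 0 hpk); apply: mem_nth.
  by rewrite size_take hsz hk.
have hpos2 : forall q, (k <= q)%N -> (q < size w)%N -> w`_q \in t.
  move=> q hkq hq; by rewrite -(subnKC hkq) -nth_drop mem_nth // size_drop ltn_sub2r // (leq_ltn_trans hkq hq).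
have hqt : forall p, (p < size w)%N -> w`_p \in t -> forall q, (p < q)%N -> (q < size w)%N -> w`_q \in t.
  move=> p hp ht q hpq hq; apply: hpos2 => //.
  exact: ltnW (leq_ltn_trans (hpost p hp ht) hpq).
exact: (@partA w t n _ _ hmemabs hex h0 hnegt tw hqt hyt hzt nb).
Qed.
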